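(* For every $n\in\mathbb{N}$, $$a_{n,-n}=\frac{n\,a_{1,-1}^{\,n}}{6^{n-1}},\qquad a_{n,n}=\frac{n\,a_{1,1}^{\,n}}{6^{n-1}}.$$ Equivalently, $\sum_{n\ge0}\Theta^na_{n,-n}x^n=1+\dfrac{b_{1,-1}x}{(1-b_{1,-1}x/6)^2}$ with $b_{1,-1}=\Theta a_{1,-1}$.
   Context: Let $\varepsilon\in\{\pm1\}$, $b\in\mathbb{R}\setminus\{0\}$, $a\in\mathbb{C}$, and consider the degenerate third Painlevé equation $u''=\frac{(u')^2}{u}-\frac{u'}{\tau}+\frac1\tau(-8\varepsilon u^2+2ab)+\frac{b^2}{u}$. Put $\theta(\tau)=3^{3/2}(\varepsilon b)^{1/3}\tau^{2/3}$, $\Theta=3^{3/4}(\varepsilon b)^{1/6}$ (so $\theta=\Theta^2\tau^{2/3}$) and $\alpha=2i\sqrt3\,a$. Let $\varkappa\in\mathbb{C}$ with $|\mathrm{Re}\,\varkappa|<1/2$ and $w=\tau^{2\varkappa/3}e^{i\theta(\tau)}$. Consider the (general-solution) asymptotic expansion $$u(\tau)=\frac{\varepsilon(\varepsilon b)^{2/3}}{2}\tau^{1/3}\Big(1+\sum_{k=1}^{\infty}\tau^{-k/3}\sum_{j=-k}^{k}a_{k,j}w^j\Big),\qquad \mathrm{Re}\,\tau\to+\infty,\ |\mathrm{Im}\,\theta(\tau)|<\delta,$$ where $a_{1,0}=0$, $a_{1,1}a_{1,-1}=-\dfrac{i\varkappa}{\sqrt3(\varepsilon b)^{1/3}}$ (equivalently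 $\Theta^2a_{1,1}a_{1,-1}=-3i\varkappa$), and all remaining coefficients $a_{k,j}$ are uniquely determined by $a_{1,1},a_{1,-1},a,b,\varepsilon$ via formal substitution of the expansion into the equation; set $a_{0,0}=1$. *)

(* Defs.v *)
From mathcomp Require Import all_boot all_algebra.
From mathcomp Require Import reals.
From mathcomp.real_closed Require Import complex.
Set Implicit Arguments.
Unset Strict Implicit.
Unset Printing Implicit Defensive.
Import GRing.Theory Num.Theory.
Local Open Scope ring_scope.

(* A formal term [(m, f)] with [m : int], [f : nat -> int -> C] stands for  *)
(*     tau^(m/3) * \sum_(k >= 0) \sum_(-k <= j <= k) f k j tau^(-k/3) w^j   *)
(* where  w = tau^(2 kappa/3) e^(i theta(tau)),  theta = Theta^2 tau^(2/3). *)
(* Only the values f k j with |j| <= k are meaningful (this is the shape of *)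
(* the expansion in the paper; it is preserved by all operations below).    *)

Section FormalSeries.
Variable R : realType.
Local Notation C := (R[i]).

Definition coefs := nat -> int -> C.
Definition fterm := (int * coefs)%type.

Definition RtoC (x : R) : C := Complex x 0.

Definition cadd (f g : coefs) : coefs := fun k j => f k j + g k j.

(* multiplication by tau^(-n/3) *)
Definition czshift (n : nat) (f : coefs) : coefs :=
  fun k j => if (n <= k)%N then f (k - n)%N j else 0.

(* Cauchy product in (tau^(-1/3), w), using |j1| <= k1 for the left factor *)
Definition cmul (f g : coefs) : coefs := fun k j =>
  \sum_(k1 < k.+1) \sum_(i < (2 * k1).+1)
     f k1 (i%:Z - k1%:Z) * g (k - k1)%N (j - (i%:Z - k1%:Z)).

Definition tconst (x : C) : fterm :=
  (0%Z, fun k j => if (k == 0%N) && (j == 0%Z) then x else 0).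
Definition ttau : fterm :=
  (3%Z, fun k j => if (k == 0%N) && (j == 0%Z) then 1 else 0).

Definition tadd (u v : fterm) : fterm :=
  let M := Num.max u.1 v.1 in
  (M, cadd (czshift `|M - u.1|%N u.2) (czshift `|M - v.1|%N v.2)).

Definition tmul (u v : fterm) : fterm := (u.1 + v.1, cmul u.2 v.2).

Definition tscale (x : C) (u : fterm) : fterm := tmul (tconst x) u.

(* d/dtau, computed termwise:
   d/dtau (tau^((m-k)/3) w^j)
     = ((m-k)/3 + 2 j kappa/3) tau^((m-k-3)/3) w^j
       + i j (2/3) Theta^2 tau^((m-k-1)/3) w^j,
   since w'/w = 2 kappa/(3 tau) + i theta'(tau), theta' = (2/3) Theta^2 tau^(-1/3). *)
Definition tderiv (Theta kappa : C) (u : fterm) : fterm :=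
  let m := u.1 in let f := u.2 in
  (m - 1, fun k j =>
     2%:R * 'i / 3%:R * Theta ^+ 2 * j%:~R * f k j
     + (if (2 <= k)%N then
          ((m - k%:Z + 2)%:~R / 3%:R + 2%:R * j%:~R * kappa / 3%:R)
            * f (k - 2)%N j
        else 0)).

Definition tzero (u : fterm) : Prop := forall k j, u.2 k j = 0.

End FormalSeries.

Section DP3.
Variable R : realType.
Local Notation C := (R[i]).

Definition Theta (eps b : R) : C :=
  4.-root (27%:R : C) * 6.-root (RtoC (eps * b)).

Definition uprefactor (eps b : R) : C :=
  RtoC eps * (6.-root (RtoC (eps * b))) ^+ 4 / 2%:R.

(* coefficient of tau^(-k/3) w^j in 1 + \sum_k tau^(-k/3) \sum_(-k..k) a_kj w^j *)
Definition ucoef (a : nat -> int -> C) : coefs R := fun k j =>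
  if k == 0%N then (if j == 0%Z then 1 else 0)
  else if (`|j| <= k)%N then a k j else 0.

(* the formal series u = eps (eps b)^(2/3)/2 * tau^(1/3) (1 + ...) *)
Definition userie (eps b : R) (a : nat -> int -> C) : fterm R :=
  (1%Z, fun k j => uprefactor eps b * ucoef a k j).

(* The equation
     u'' = (u')^2/u - u'/tau + (1/tau)(-8 eps u^2 + 2 a b) + b^2/u
   multiplied by u*tau, i.e.
     tau u u'' - tau (u')^2 + u u' + 8 eps u^3 - 2 a b u - b^2 tau = 0. *)
Definition dP3_formal (eps b : R) (acst kappa : C) (u : fterm R) : fterm R :=
  let D := tderiv (Theta eps b) kappa in
  let u1 := D u in let u2 := D u1 in
  tadd (tmul (ttau R) (tmul u u2))
  (tadd (tscale (-1) (tmul (ttau R) (tmul u1 u1)))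
  (tadd (tmul u u1)
  (tadd (tscale (8%:R * RtoC eps) (tmul u (tmul u u)))
  (tadd (tscale (- (2%:R * acst * RtoC b)) u)
        (tscale (- RtoC (b ^+ 2)) (ttau R)))))).

End DP3.

(* Main.v *)
Require Import Defs.
From mathcomp Require Import all_boot all_order all_algebra.
From mathcomp Require Import reals.
From mathcomp.real_closed Require Import complex.
From mathcomp Require Import zify ring lra.
Set Implicit Arguments.
Unset Strict Implicit.
Unset Printing Implicit Defensive.
Import Order.TTheory GRing.Theory Num.Theory.
Local Open Scope ring_scope.

Section PolyPart.
Variable C : numFieldType.
Implicit Types (p q V W : {poly C}).

Definition th p : {poly C} := locked ('X * p^`()).

Lemma coef_th p k : (th p)`_k = k%:R * p`_k.
Proof. by rewrite /th -lock coefXM; case: k => [|k] /=; rewrite ?mul0r // coef_deriv mulr_natl. Qed.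

Lemma thD p q : th (p + q) = th p + th q.
Proof. by rewrite /th -!lock derivD mulrDr. Qed.
Lemma thB p q : th (p - q) = th p - th q.
Proof. by rewrite /th -!lock derivB mulrBr. Qed.
Lemma thM p q : th (p * q) = th p * q + p * th q.
Proof. rewrite /th -!lock derivM; ring. Qed.
Lemma thMn p n : th (p *+ n) = th p *+ n.
Proof. by rewrite /th -!lock derivMn mulrnAr. Qed.
Lemma th1 : th 1 = 0.
Proof. by rewrite /th -lock -polyC1 derivC mulr0. Qed.
Lemma thC c : th c%:P = 0.
Proof. by rewrite /th -lock derivC mulr0. Qed.
Lemma thCM c p : th (c%:P * p) = c%:P * th p.
Proof. by rewrite thM thC mul0r add0r. Qed.

Definition F V := (V * th (th V) - th V * th V) *+ 3 - V * V * V + 1.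

Definition cong N p q := forall n, (n < N)%N -> p`_n = q`_n.

Lemma congM0 N p q : cong N p 0 -> cong N (q * p) 0.
Proof.
move=> H n Hn; rewrite coefM coef0 big1 // => j _.
rewrite H ?coef0 ?mulr0 //; have := ltn_ord j; lia.
Qed.


Lemma coefZX (c : C) n (Y : {poly C}) : (c%:P * 'X^n * Y)`_n = c * Y`_0.
Proof. by rewrite -mulrA (mulrC 'X^n) mulrA coefMXn ltnn subnn coefCM. Qed.

Lemma coefZZX (c : C) n (Y : {poly C}) : (0 < n)%N -> (c%:P * 'X^n * (c%:P * 'X^n) * Y)`_n = 0.
Proof.
move=> Hn; have -> : c%:P * 'X^n * (c%:P * 'X^n) * Y = (c%:P * c%:P * Y) * ('X^n * 'X^n) by ring.
by rewrite -exprD coefMXn ifT //; lia.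
Qed.

Lemma F_step W n (c : C) : (0 < n)%N -> W`_0 = 1 ->
  (F (W + c%:P * 'X^n))`_n = (F W)`_n + c * ((n%:R ^+ 2 - 1) *+ 3).
Proof.
move=> Hn HW; set Z := c%:P * 'X^n.
have thZ : th Z = (n%:R)%:P * Z.
  rewrite /Z thCM /th -lock derivXn mulrnAr -exprS prednK // polyC_natr -mulr_natl; ring.
rewrite /F !thD thZ thCM thZ.
set nn := (n%:R)%:P.
have -> : (W + Z) * (th (th W) + nn * (nn * Z)) - (th W + nn * Z) * (th W + nn * Z) = 
   (W * th (th W) - th W * th W) + Z * (W * nn * nn + th (th W) - th W * nn *+ 2) by ring.
have -> : (W + Z) * (W + Z) * (W + Z) = W * W * W + Z * (W * W *+ 3) + Z * Z * (W *+ 3 + Z) by ring.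
set A1 := W * th (th W) - th W * th W.
set Y1 := W * nn * nn + th (th W) - th W * nn *+ 2.
have -> : (A1 + Z * Y1) *+ 3 - (W * W * W + Z * (W * W *+ 3) + Z * Z * (W *+ 3 + Z)) + 1
   = (A1 *+ 3 - W * W * W + 1) + Z * ((Y1 - W * W) *+ 3) - Z * Z * (W *+ 3 + Z) by ring.
rewrite coefB coefD coefZX coefZZX // subr0; congr (_ + _ * _).
rewrite /Y1 coefMn !coefB coefD coefMn !coef0M !coef_th !coefC HW /=; ring.
Qed.

Lemma poly_split (A : nat -> C) n :
  \poly_(i < n.+1) A i = \poly_(i < n) A i + (A n)%:P * 'X^n.
Proof. by rewrite !poly_def big_ord_recr /= mul_polyC. Qed.

Lemma uniq_step (A B : nat -> C) n : (1 < n)%N ->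
  (forall k, (k < n)%N -> A k = B k) -> A 0%N = 1 ->
  (F (\poly_(i < n.+1) A i))`_n = 0 -> (F (\poly_(i < n.+1) B i))`_n = 0 ->
  A n = B n.
Proof.
move=> Hn HAB HA0; rewrite !poly_split.
have -> : \poly_(i < n) B i = \poly_(i < n) A i.
  by apply: eq_poly => i Hi; rewrite HAB.
have H0 : (\poly_(i < n) A i)`_0 = 1 by rewrite coef_poly ifT //; lia.
rewrite !F_step //; try lia.
set Fw := (F (\poly_(i < n) A i))`_n; set k := (n%:R ^+ 2 - 1) *+ 3.
move=> E1 E2; have E : (A n - B n) * k = 0.
  by rewrite mulrBl; apply/eqP; rewrite subr_eq0; apply/eqP; apply: (addrI Fw); rewrite E1 E2.
have Hk : k != 0.
  rewrite /k -mulr_natr mulf_neq0 ?pnatr_eq0 // subr_eq0 -natrX pnatr_eq1.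
  apply/eqP => H; nia.
by apply/eqP; rewrite -subr_eq0; apply/eqP; apply: (mulIf Hk); rewrite mul0r.
Qed.


Lemma tri m : (2 * \sum_(j < m.+1) j = m * m.+1)%N.
Proof.
elim: m => [|m IH]; first by rewrite big_ord_recr big_ord0.
rewrite big_ord_recr /= mulnDr IH; lia.
Qed.

Lemma sum6 m : (6 * \sum_(j < m.+1) j * (m - j) + m = m ^ 3)%N.
Proof.
elim: m => [|m IH]; first by rewrite big_ord_recr big_ord0.
rewrite big_ord_recr /= subnn muln0 addn0.
have -> : (\sum_(j < m.+1) j * (m.+1 - j) = \sum_(j < m.+1) j * (m - j) + \sum_(j < m.+1) j)%N.
  rewrite -big_split /=; apply: eq_bigr => j _; have := ltn_ord j; nia.
have := tri m; nia.
Qed.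

Lemma FB N (w : C) n : (n < N)%N ->
  (F (1 + (\poly_(i < N) (i%:R * w ^+ i)) *+ 6))`_n = 0.
Proof.
move=> HnN; set G := \poly_(i < N) (i%:R * w ^+ i); set V := 1 + G *+ 6.
have h1 : forall m, (m < N)%N -> (th (th G))`_m = (G + (G * G) *+ 6)`_m.
  move=> m Hm; rewrite !coef_th coefD coefMn coefM.
  have -> : \sum_(j < m.+1) G`_j * G`_(m - j) = (\sum_(j < m.+1) j * (m - j))%:R * w ^+ m.
    rewrite natr_sum mulr_suml; apply: eq_bigr => j _.
    have Hj := ltn_ord j.
    rewrite /G !coef_poly !ifT; try lia.
    have -> : w ^+ m = w ^+ j * w ^+ (m - j) by rewrite -exprD subnKC //; lia.
    rewrite natrM; ring.
  rewrite /G coef_poly Hm.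
  have E := congr1 (fun x => x%:R : C) (sum6 m); rewrite /= natrD natrM natrX in E.
  transitivity ((m%:R : C) ^+ 3 * w ^+ m); first ring.
  rewrite -E mulrDl addrC; congr (_ + _). by rewrite -mulrA mulr_natl.
set E1 := th (th V) - V * V + V.
have thV : th V = th G *+ 6 by rewrite /V thD th1 thMn add0r.
have hE1 : cong N E1 0.
  move=> m Hm; rewrite /E1 thV thMn coef0.
  have -> : th (th G) *+ 6 - V * V + V = (th (th G) - (G + (G * G) *+ 6)) *+ 6 by rewrite /V; ring.
  by rewrite coefMn coefB h1 // subrr mul0rn.
set H := (th V * th V) *+ 3 - ((V * V * V) *+ 2 - (V * V) *+ 3 + 1).
have thH : th H = (th V *+ 6) * E1.
  rewrite /H /E1 !(thB, thD, thMn, thM, th1); ring.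
have hH : cong N H 0.
  move=> m Hm; rewrite coef0.
  have := congM0 (th V *+ 6) hE1 Hm; rewrite -thH coef_th coef0.
  case: m Hm => [|k] Hk.
    move=> _; rewrite /H !(coefB, coefD, coefMn) !coef0M !coef_th !mul0r coef1.
    have -> : V`_0 = 1 by rewrite /V coefD coef1 coefMn /G coef_poly ifT // mul0r mul0rn addr0.
    rewrite eqxx /=; ring.
  move/eqP; rewrite mulf_eq0 pnatr_eq0 /=; by move/eqP.
have -> : F V = (V *+ 3) * E1 - H by rewrite /F /E1 /H; ring.
by rewrite coefB (congM0 _ hE1 HnN) (hH _ HnN) coef0 subrr.
Qed.

End PolyPart.

Section Diag.
Variable R : realType.
Local Notation C := (R[i]).
Implicit Types (f g : coefs R) (u v : fterm R).

Definition supp f := forall k j, (k < `|j|)%N -> f k j = 0.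
Definition ds (s : bool) (k : nat) : int := if s then k%:Z else - k%:Z.
Definition dg s f k := f k (ds s k).
Definition repr N s f (p : {poly C}) := forall k, (k < N)%N -> dg s f k = p`_k.

Lemma abs_ds s k : `|ds s k|%N = k.
Proof. by case: s; rewrite /ds ?abszN. Qed.

Lemma supp_cmul f g : supp g -> supp (cmul f g).
Proof.
move=> Hg k j Hk; rewrite /cmul big1 // => k1 _; rewrite big1 // => i _.
rewrite Hg ?mulr0 //; have := ltn_ord k1; have := ltn_ord i; lia.
Qed.

Lemma dg_cmul s f g k : supp g ->
  dg s (cmul f g) k = \sum_(k1 < k.+1) dg s f k1 * dg s g (k - k1).
Proof.
move=> Hg; rewrite /dg /cmul; apply: eq_bigr => k1 _.
have hk1 := ltn_ord k1.
case: s; rewrite /ds.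
- rewrite big_ord_recr /= big1 ?add0r.
  + congr (f _ _ * g _ _); lia.
  + move=> i _; rewrite Hg ?mulr0 //; have := ltn_ord i; lia.
- rewrite big_ord_recl /= big1 ?addr0.
  + congr (f _ _ * g _ _); lia.
  + move=> i _; rewrite Hg ?mulr0 // /bump /=; have := ltn_ord i; lia.
Qed.

Lemma repr_cmul N s f g p q : supp g -> repr N s f p -> repr N s g q ->
  repr N s (cmul f g) (p * q).
Proof.
move=> Hg Hp Hq k Hk; rewrite dg_cmul // coefM; apply: eq_bigr => i _.
have := ltn_ord i => Hi; rewrite Hp ?Hq //; lia.
Qed.

Lemma supp_cadd f g : supp f -> supp g -> supp (cadd f g).
Proof. by move=> Hf Hg k j Hk; rewrite /cadd Hf ?Hg ?addr0. Qed.

Lemma repr_cadd N s f g p q : repr N s f p -> repr N s g q ->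
  repr N s (cadd f g) (p + q).
Proof. by move=> Hp Hq k Hk; rewrite coefD -Hp -?Hq. Qed.

Lemma supp_czshift n f : supp f -> supp (czshift n f).
Proof. move=> Hf k j Hk; rewrite /czshift; case: ifP => // H; apply: Hf; lia. Qed.

Lemma repr_czshift0 N s f p : repr N s f p -> repr N s (czshift 0 f) p.
Proof. by move=> Hp k Hk; rewrite -Hp // /dg /czshift /= subn0. Qed.

Lemma repr_czshiftS N s n f : supp f -> repr N s (czshift n.+1 f) 0.
Proof.
move=> Hf k Hk; rewrite coef0 /dg /czshift; case: ifP => // H.
apply: Hf; rewrite abs_ds; lia.
Qed.

Lemma supp_tadd u v : supp u.2 -> supp v.2 -> supp (tadd u v).2.
Proof. by move=> Hu Hv; apply: supp_cadd; apply: supp_czshift. Qed.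

Lemma repr_tadd_eq N s u v p q : u.1 = v.1 -> repr N s u.2 p -> repr N s v.2 q ->
  repr N s (tadd u v).2 (p + q).
Proof.
move=> E Hp Hq; rewrite /tadd /= E maxxx subrr /=.
by apply: repr_cadd; apply: repr_czshift0.
Qed.

Lemma repr_tadd_lt N s u v q : (u.1 < v.1)%R -> supp u.2 -> repr N s v.2 q ->
  repr N s (tadd u v).2 q.
Proof.
move=> E Hu Hq; rewrite /tadd /=.
have -> : Num.max u.1 v.1 = v.1 by apply/max_idPr; apply: ltW.
rewrite subrr /=; rewrite -[q]add0r; apply: repr_cadd; last by apply: repr_czshift0.
case Hn : `|v.1 - u.1|%N => [|n]; first by exfalso; move: Hn E; lia.
exact: repr_czshiftS.
Qed.

Lemma tadd1 u v : (tadd u v).1 = Num.max u.1 v.1.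
Proof. by []. Qed.

Definition sgb (s : bool) : C := if s then 1 else -1.

Lemma supp_tderiv Th ka u : supp u.2 -> supp (tderiv Th ka u).2.
Proof.
move=> H k j Hk /=; rewrite H ?mulr0 ?add0r //; case: ifP => // _.
rewrite H ?mulr0 //; lia.
Qed.

Lemma repr_tderiv N s Th ka u p : supp u.2 -> repr N s u.2 p ->
  repr N s (tderiv Th ka u).2 ((2%:R * 'i / 3%:R * Th ^+ 2 * sgb s)%:P * th p).
Proof.
move=> Hs Hp k Hk; rewrite /dg /= [X in _ + X](_ : _ = 0); last first.
  case: ifP => // H2; rewrite Hs ?mulr0 // abs_ds; lia.
rewrite addr0 coefCM coef_th -Hp // /dg.
move: Hp => _; case: s; rewrite /ds /sgb ?mulrNz /=; ring.
Qed.

Lemma supp_tconst (x : C) : supp (tconst x).2.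
Proof. move=> k j Hk /=; case: ifP => // /andP[/eqP Hk0 /eqP Hj0]; lia. Qed.

Lemma repr_tconst N s (x : C) : repr N s (tconst x).2 x%:P.
Proof. by move=> k Hk; rewrite coefC /dg /=; case: k {Hk} => [|k]; case: s. Qed.

Lemma supp_tmul u v : supp v.2 -> supp (tmul u v).2.
Proof. exact: supp_cmul. Qed.


Definition Aseq s (a : nat -> int -> C) k := ucoef a k (ds s k).

Lemma supp_userie eps b a : supp (userie eps b a).2.
Proof.
move=> k j Hk /=; rewrite /ucoef; case: ifP => [/eqP Hk0|_].
  by case: ifP => [/eqP Hj|_]; rewrite ?mulr0 //; move: Hk; rewrite Hj Hk0.
by rewrite leqNgt Hk /= mulr0.
Qed.

Lemma repr_userie N s eps b a :
  repr N s (userie eps b a).2 ((uprefactor eps b)%:P * \poly_(i < N) Aseq s a i).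
Proof. by move=> k Hk; rewrite coefCM coef_poly Hk. Qed.

Lemma repr_ttau N s : repr N s (ttau R).2 1%:P.
Proof. by move=> k0 _; rewrite coefC /dg /=; case: k0 => [|k0] /=; rewrite /ds; case: s. Qed.
Lemma supp_ttau : supp (ttau R).2.
Proof. by move=> k0 j Hk0 /=; case: ifP => // /andP[/eqP Hk1 /eqP Hj1]; lia. Qed.

Lemma extract N s eps b acst kappa a :
  tzero (dP3_formal eps b acst kappa (userie eps b a)) ->
  let c := (2%:R * 'i / 3%:R * Theta eps b ^+ 2 * sgb s)%:P in
  let pu := (uprefactor eps b)%:P * \poly_(i < N) Aseq s a i in
  forall k, (k < N)%N ->
  ((1%:P * (pu * (c * th (c * th pu)))) + ((-1)%:P * (1%:P * ((c * th pu) * (c * th pu))) +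
    ((8%:R * RtoC eps)%:P * (pu * (pu * pu)) + (- RtoC (b ^+ 2))%:P * 1%:P)))`_k = 0.
Proof.
move=> Hz c pu k Hk.
set U := userie eps b a.
set D := tderiv (Theta eps b) kappa.
have sU : supp U.2 by apply: supp_userie.
have rU : repr N s U.2 pu by apply: repr_userie.
have s1 : supp (D U).2 by apply: supp_tderiv.
have r1 : repr N s (D U).2 (c * th pu) by apply: repr_tderiv.
have s2 : supp (D (D U)).2 by apply: supp_tderiv.
have r2 : repr N s (D (D U)).2 (c * th (c * th pu)) by apply: repr_tderiv.
have rt : repr N s (ttau R).2 1%:P by apply: repr_ttau.
have st : supp (ttau R).2 by apply: supp_ttau.
have HH := Hz k (ds s k); change (dg s (dP3_formal eps b acst kappa U).2 k = 0) in HH.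
apply: (etrans (esym _) HH); move: k Hk {HH}.
rewrite /dP3_formal -/D.
apply: repr_tadd_eq; first by [].
  apply: repr_cmul => //; first by repeat apply: supp_cmul.
  by apply: repr_cmul.
apply: repr_tadd_eq; first by [].
  apply: repr_cmul => //; first by repeat apply: supp_cmul.
    by apply: repr_tconst.
  apply: repr_cmul => //; first by repeat apply: supp_cmul.
  by apply: repr_cmul.
apply: repr_tadd_lt; first by [].
  by apply: supp_cmul.
apply: repr_tadd_eq; first by [].
  apply: repr_cmul => //; first by repeat apply: supp_cmul.
    by apply: repr_tconst.
  apply: repr_cmul => //; first by repeat apply: supp_cmul.
  by apply: repr_cmul.
apply: repr_tadd_lt; first by [].
  by apply: supp_cmul.
apply: repr_cmul => //.
  by apply: repr_tconst.
Qed.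

End Diag.

Local Notation rc := (real_complex _).

Lemma keyF (R : realType) (eps b : R) (acst kappa : R[i]) (a : nat -> int -> R[i]) s :
  (eps = 1 \/ eps = -1) -> b != 0 ->
  tzero (dP3_formal eps b acst kappa (userie eps b a)) ->
  forall N k, (k < N)%N -> (F (\poly_(i < N) Aseq s a i))`_k = 0.
Proof.
move=> Heps Hb Hz N k Hk.
have := extract (N:=N) s Hz Hk.
set r := 6.-root (RtoC (eps * b)).
have RtoCE : forall x : R, RtoC x = rc x by [].
have r6 : r ^+ 6 = rc (eps * b) by rewrite /r rootCK.
have e2 : (rc eps) ^+ 2 = 1.
  by rewrite -rmorphXn /=; case: Heps => ->; rewrite ?sqrrN expr1n.
have Knz : r ^+ 12 != 0.
  rewrite (_ : 12 = 6 * 2)%N // exprM r6 expf_neq0 //.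
  rewrite rmorphM /= mulf_neq0 //.
    by case: Heps => ->; rewrite ?rmorphN rmorph1 ?oppr_eq0 oner_eq0.
  by apply: contra Hb => /eqP H; apply/eqP; apply: complexI; rewrite H.
set K := r ^+ 12.
set X := \poly_(i < N) Aseq s a i.
set P := uprefactor eps b.
set c := 2%:R * 'i / 3%:R * Theta eps b ^+ 2 * sgb R s.
rewrite !thCM.
have hc : c%:P * c%:P * P%:P * P%:P = - (K%:P *+ 3).
  rewrite -!polyCM -polyCMn -polyCN; congr polyC.
  rewrite /c /P /Theta /uprefactor RtoCE.
  have q4 : (4.-root (27%:R : R[i])) ^+ 4 = 27%:R by rewrite rootCK.
  have sg2 : sgb R s ^+ 2 = 1 by rewrite /sgb; case: ifP => _; rewrite ?sqrrN expr1n.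
  rewrite -/r /K.
  transitivity ('i ^+ 2 * sgb R s ^+ 2 * (rc eps) ^+ 2 * (4.-root (27%:R : R[i])) ^+ 4 * r ^+ 12 / 9%:R).
    rewrite !RtoCE; by field.
  by rewrite sqrCi sg2 e2 q4; field.
have h8 : (8%:R * RtoC eps)%:P * P%:P * P%:P * P%:P = K%:P.
  rewrite -!polyCM; congr polyC.
  rewrite /P /uprefactor RtoCE -/r /K.
  transitivity (((rc eps) ^+ 2) ^+ 2 * r ^+ 12); first by field.
  by rewrite e2 expr1n mul1r.
have hb : (- RtoC (b ^+ 2))%:P = - K%:P.
  rewrite -polyCN; congr polyC; congr (- _).
  rewrite RtoCE /K (_ : 12 = 6 * 2)%N // exprM r6.
  by rewrite -rmorphXn /= exprMn; case: Heps => ->; rewrite ?sqrrN expr1n mul1r.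
rewrite polyCN polyC1.
have -> : 1 * (P%:P * X * (c%:P * (c%:P * (P%:P * th (th X))))) +
    (- 1 * (1 * (c%:P * (P%:P * th X) * (c%:P * (P%:P * th X)))) +
     ((8%:R * RtoC eps)%:P * (P%:P * X * (P%:P * X * (P%:P * X))) + (- RtoC (b ^+ 2))%:P * 1))
   = (c%:P * c%:P * P%:P * P%:P) * (X * th (th X) - th X * th X)
     + ((8%:R * RtoC eps)%:P * P%:P * P%:P * P%:P) * (X * X * X) + (- RtoC (b ^+ 2))%:P by ring.
rewrite hc h8 hb.
have -> : - (K%:P *+ 3) * (X * th (th X) - th X * th X) + K%:P * (X * X * X) + - K%:P
   = - (K%:P * F X) by rewrite /F; ring.
rewrite coefN coefCM => /eqP; rewrite oppr_eq0 mulf_eq0 (negbTE Knz) /=.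
by move/eqP.
Qed.

Unset Implicit Arguments.
Set Strict Implicit.

Theorem mainTheorem6 (R : realType) (eps b : R) (acst kappa : R[i])
    (a : nat -> int -> R[i]) :
  (eps = 1 \/ eps = -1) ->
  b != 0 ->
  `|'Re kappa| < 1 / 2%:R ->
  a 1%N 0 = 0 ->
  a 1%N 1 * a 1%N (-1) = - 'i * kappa / (sqrtC (3%:R : R[i]) * (6.-root (RtoC (eps * b))) ^+ 2) ->
  tzero (dP3_formal eps b acst kappa (userie eps b a)) ->
  forall n : nat, (1 <= n)%N ->
    a n (- n%:Z) = n%:R * a 1%N (-1) ^+ n / 6%:R ^+ n.-1 /\
    a n n%:Z = n%:R * a 1%N 1 ^+ n / 6%:R ^+ n.-1.
Proof.
move=> Heps Hb _ _ _ Hz.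
have main : forall s n, (1 <= n)%N ->
    a n (ds s n) = n%:R * a 1%N (ds s 1) ^+ n / 6%:R ^+ n.-1.
  move=> s.
  set beta := a 1%N (ds s 1).
  set w := beta / 6%:R.
  pose B k := if k == 0%N then 1 else (k%:R * w ^+ k) *+ 6.
  have PB : forall N, (0 < N)%N ->
      \poly_(i < N) B i = 1 + (\poly_(i < N) (i%:R * w ^+ i)) *+ 6.
    move=> N HN; apply/polyP => i; rewrite coef_poly coefD coefMn coef1 coef_poly /B.
    case: i => [|i] /=; first by rewrite HN mul0r mul0rn addr0.
    by case: ifP; rewrite ?add0r ?mul0rn.
  have FBN : forall N k, (k < N)%N -> (F (\poly_(i < N) B i))`_k = 0.
    move=> N k Hk; rewrite PB; [exact: FB | lia].
  have A0 : Aseq s a 0 = 1 by rewrite /Aseq /ucoef /ds; case: (s).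
  have AB : forall n k, (k <= n)%N -> Aseq s a k = B k.
    elim=> [|n IH] k Hk.
      by have -> : k = 0%N by lia.
    case: (ltnP k n.+1) => Hkn; first by apply: IH; lia.
    have -> : k = n.+1 by lia.
    case: n IH {Hk Hkn} => [|n] IH.
      rewrite /B /= /Aseq /ucoef abs_ds /= -/beta /w -mulr_natr; by field.
    apply: (uniq_step (A := Aseq s a) (B := B)) => //.
    - exact: (keyF s Heps Hb Hz).
    - exact: FBN.
  move=> n Hn; have := AB n n (leqnn n); rewrite /Aseq /ucoef abs_ds leqnn.
  case: n Hn => [|n] //= _ ->.
  rewrite /B /w /= -mulr_natr expr_div_n !exprS; field.
  by rewrite expf_neq0 // pnatr_eq0.
move=> n Hn; split; [exact: (main false n Hn) | exact: (main true n Hn)].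
Qed.
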